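(* For every $\varepsilon>0$ there exists a positive integer $L$ such that for all sufficiently large $N$, $$\sum_{k=L}^N P\big(R_{k,N}\ge N^{1-r}\big)<\varepsilon.$$
   Context: Fix $r\in(0,1)$. Multitype Yule process: at time $0$ a single individual of type $1$ is born; no deaths; each individual independently gives birth at rate $1$; a newborn has, independently, its parent's type with probability $1-r$ and otherwise a brand-new type. Individuals are numbered in order of birth (the initial one is the 1st); if the $k$-th individual born has a type different from its parent, that type is called type $k$. $T_N$ is the time the population reaches size $N$, and $R_{k,N}$ is the number of type-$k$ individuals at time $T_N$. *)

(* Defs.v *)
From HB Require Import structures.
From mathcomp Require Import all_boot all_order all_algebra.
From mathcomp Require Import reals exp.
Set Implicit Arguments. Unset Strict Implicit. Unset Printing Implicit Defensive.
Import Order.TTheory GRing.Theory Num.Theory.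
Local Open Scope ring_scope.

(* Embedded jump chain of the multitype Yule process, observed at T_N.
   Individuals are indexed 0..N-1 (index i = the (i+1)-th individual born).
   An outcome is (par, mu): par i is the parent of individual i (i > 0,
   uniform among the i earlier individuals), mu i says whether individual i
   got a brand-new type (probability r, independently). Individual 0 is the
   initial individual (par 0 = 0, mu 0 = false by convention). *)

Definition yule_weight (R : realType) (r : R) (N : nat)
  (par : {ffun 'I_N -> 'I_N}) (mu : {ffun 'I_N -> bool}) : R :=
  \prod_(i < N)
    (if nat_of_ord i == 0%N then
       ((nat_of_ord (par i) == 0%N)%:R * (~~ mu i)%:R)
     else
       ((nat_of_ord (par i) < nat_of_ord i)%N%:R / (nat_of_ord i)%:R
        * (if mu i then r else 1 - r))).

Fixpoint founder (N : nat) (par : 'I_N -> 'I_N) (mu : 'I_N -> bool)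
  (fuel : nat) (i : 'I_N) : 'I_N :=
  match fuel with
  | 0 => i
  | f.+1 => if (nat_of_ord i == 0%N) || mu i then i else founder par mu f (par i)
  end.

(* R_{k,N}: number of individuals of type k (k is 1-indexed as in the paper:
   type k is the type whose founder is the k-th individual born) at time T_N *)
Definition Rkn (N : nat) (par : {ffun 'I_N -> 'I_N}) (mu : {ffun 'I_N -> bool})
  (k : nat) : nat :=
  #|[pred i : 'I_N | (nat_of_ord (founder par mu N i)).+1 == k]|.

Definition yule_prob (R : realType) (r : R) (N : nat)
  (E : {ffun 'I_N -> 'I_N} -> {ffun 'I_N -> bool} -> bool) : R :=
  \sum_(par : {ffun 'I_N -> 'I_N}) \sum_(mu : {ffun 'I_N -> bool})
     yule_weight r par mu * (E par mu)%:R.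

(* Main.v *)
Require Import Defs.
From HB Require Import structures.
From mathcomp Require Import all_boot all_order all_algebra.
From mathcomp Require Import reals exp sequences.
From mathcomp Require Import ring lra zify.
Import Order.TTheory GRing.Theory Num.Theory.
Set Implicit Arguments. Unset Strict Implicit. Unset Printing Implicit Defensive.
Local Open Scope ring_scope.


Definition updf (I J : finType) (f : {ffun I -> J}) (j : I) (x : J) : {ffun I -> J} :=
  [ffun i => if i == j then x else f i].

Lemma updf_at (I J : finType) (f : {ffun I -> J}) j x : updf f j x j = x.
Proof. by rewrite /updf ffunE eqxx. Qed.

Lemma updf_ne (I J : finType) (f : {ffun I -> J}) j x i : i != j -> updf f j x i = f i.
Proof. by rewrite /updf ffunE => /negPf ->. Qed.

Lemma updf_updf (I J : finType) (f : {ffun I -> J}) j x y : updf (updf f j y) j x = updf f j x.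
Proof. by apply/ffunP => i; rewrite /updf !ffunE; case: eqP. Qed.

Lemma updf_eq (I J : finType) (f : {ffun I -> J}) j x : (updf f j x == f) = (f j == x).
Proof.
apply/eqP/eqP => [<-|<-]; first by rewrite updf_at.
by apply/ffunP => i; rewrite /updf !ffunE; case: eqP => [->|].
Qed.

Lemma resample (R : comNzRingType) (I J : finType) (j : I) (a : J -> R)
  (B F : {ffun I -> J} -> R) :
  \sum_x a x = 1 -> (forall f x, B (updf f j x) = B f) ->
  \sum_(f : {ffun I -> J}) a (f j) * (B f * F f) =
  \sum_(f : {ffun I -> J}) a (f j) * (B f * \sum_x a x * F (updf f j x)).
Proof.
move=> Ha HB.
have key : forall x y, \sum_(f : {ffun I -> J} | f j == y) B f * F (updf f j x) =
                       \sum_(g : {ffun I -> J} | g j == x) B g * F g.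
  move=> x y.
  rewrite (reindex_onto (fun g => updf g j y) (fun f => updf f j x)); last first.
    by move=> f /eqP fj; rewrite updf_updf; apply/eqP; rewrite updf_eq fj.
  apply: eq_big => [g|g /andP [_ /eqP Hg]].
    by rewrite updf_at eqxx /= updf_updf updf_eq.
  by rewrite HB; move: Hg; rewrite updf_updf => ->.
have split : forall G : {ffun I -> J} -> R,
    \sum_(f : {ffun I -> J}) a (f j) * G f = \sum_y a y * \sum_(f : {ffun I -> J} | f j == y) G f.
  move=> G; rewrite (partition_big (fun f : {ffun I -> J} => f j) xpredT) //=.
  apply: eq_bigr => y _; rewrite big_distrr /=.
  by apply: eq_bigr => f /eqP ->.
rewrite split.
transitivity (\sum_(f : {ffun I -> J}) \sum_x a (f j) * (a x * (B f * F (updf f j x)))); last first.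
  apply: eq_bigr => f _; rewrite mulr_sumr mulr_sumr; apply: eq_bigr => x _.
  by rewrite !mulrA; congr (_ * _); rewrite mulrAC.
rewrite exchange_big /=.
transitivity (\sum_x a x * \sum_(f : {ffun I -> J}) a (f j) * (B f * F (updf f j x))); last first.
  apply: eq_bigr => x _; rewrite big_distrr /=; apply: eq_bigr => f _.
  by rewrite mulrCA.
apply: eq_bigr => x _; congr (_ * _).
symmetry.
transitivity (\sum_y a y * \sum_(g : {ffun I -> J} | g j == x) B g * F g).
  by rewrite (split (fun f => B f * F (updf f j x))); apply: eq_bigr => y _; rewrite key.
by rewrite -big_distrl /= Ha mul1r.
Qed.


Definition Sp N (par : {ffun 'I_N -> 'I_N}) := forall i : 'I_N, (0 < i)%N -> (par i < i)%N.

Lemma founder_le N (par : {ffun 'I_N -> 'I_N}) (mu : {ffun 'I_N -> bool}) :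
  Sp par -> forall fuel (i : 'I_N), (founder par mu fuel i <= i)%N.
Proof.
move=> S; elim=> [|f IH] i //=. case: ifP => // /norP [Hi _].
apply: leq_trans (IH _) _; apply: ltnW; apply: S; by rewrite lt0n.
Qed.

Lemma founder_fuel N (par : {ffun 'I_N -> 'I_N}) (mu : {ffun 'I_N -> bool}) :
  Sp par -> forall f1 f2 (i : 'I_N), (i <= f1)%N -> (i <= f2)%N ->
  founder par mu f1 i = founder par mu f2 i.
Proof.
move=> S; elim=> [|f1 IH] [|f2] i /= h1 h2 //.
- by move: h1; rewrite leqn0 => ->.
- by move: h2; rewrite leqn0 => ->.
case: ifP => // /norP [Hi _].
have := S i; rewrite lt0n Hi => /(_ isT) Hp.
apply: IH; rewrite -ltnS; exact: leq_trans Hp _.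
Qed.

Lemma founder_local N (par par' : {ffun 'I_N -> 'I_N}) (mu mu' : {ffun 'I_N -> bool}) :
  Sp par -> forall fuel (i : 'I_N),
  (forall j : 'I_N, (j <= i)%N -> par j = par' j /\ mu j = mu' j) ->
  founder par mu fuel i = founder par' mu' fuel i.
Proof.
move=> S; elim=> [|f IH] i H //=.
rewrite (proj2 (H i (leqnn _))). case: ifP => // /norP [Hi _].
have := S i; rewrite lt0n Hi => /(_ isT) Hp.
rewrite IH; first by rewrite (proj1 (H i (leqnn _))).
move=> j hj; apply: H; apply: leq_trans hj _; exact: ltnW.
Qed.

Definition Xc N (par : {ffun 'I_N -> 'I_N}) (mu : {ffun 'I_N -> bool}) (k n : nat) : nat :=
  #|[pred i : 'I_N | (i < n)%N && (nat_of_ord (founder par mu N i) == k.-1)]|.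

Lemma Xc_S N par mu k n (h : (n < N)%N) :
  @Xc N par mu k n.+1 = (Xc par mu k n + (nat_of_ord (founder par mu N (Ordinal h)) == k.-1))%N.
Proof.
rewrite /Xc (cardD1 (Ordinal h)) inE /= ltnSn /= addnC; congr (_ + _)%N.
apply: eq_card => i; rewrite !inE ltnS leq_eqVlt.
have -> : (i == Ordinal h) = (nat_of_ord i == n) by [].
by case: eqP => //= ->; rewrite ltnn.
Qed.

Lemma Sp_upd N (par : {ffun 'I_N -> 'I_N}) (n p : 'I_N) :
  Sp par -> (p < n)%N -> Sp (updf par n p).
Proof.
move=> S hp i hi; rewrite /updf ffunE; case: eqP => [->|_] //; exact: S.
Qed.

Lemma founder_upd_lt N (par : {ffun 'I_N -> 'I_N}) mu (n p : 'I_N) b (i : 'I_N) :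
  Sp par -> (i < n)%N ->
  founder (updf par n p) (updf mu n b) N i = founder par mu N i.
Proof.
move=> S hi; symmetry; apply: founder_local => // j hj.
have hne : j != n by apply/eqP => E; move: hi; rewrite -E ltnNge hj.
by rewrite !updf_ne.
Qed.

Lemma Xc_upd N (par : {ffun 'I_N -> 'I_N}) mu (n p : 'I_N) b k :
  Sp par -> Xc (updf par n p) (updf mu n b) k n = Xc par mu k n.
Proof.
move=> S; apply: eq_card => i; rewrite !inE.
case hi: (i < n)%N => //=; by rewrite founder_upd_lt.
Qed.

Lemma founder_upd_n N (par : {ffun 'I_N -> 'I_N}) mu (n p : 'I_N) b :
  Sp par -> (0 < n)%N -> (p < n)%N ->
  founder (updf par n p) (updf mu n b) N n = if b then n else founder par mu N p.
Proof.
move=> S hn hp.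
have S' := Sp_upd S hp.
have hN : (0 < N)%N by apply: leq_ltn_trans (ltn_ord n).
move: (ltn_ord n) (ltn_ord p); case: N par mu n p hN S S' hp hn => // N' par mu n p _ S S' hp hn ltn ltp.
have hn0 : (nat_of_ord n == 0%N) = false by apply/negbTE; rewrite -lt0n.
rewrite /= hn0 /= !updf_at.
case: b => //.
rewrite (@founder_fuel _ _ _ S' N' N'.+1 p).
- by rewrite founder_upd_lt.
- by rewrite -ltnS.
- exact: ltnW.
Qed.


Definition Eop (R : realType) (r : R) N
  (F : {ffun 'I_N -> 'I_N} -> {ffun 'I_N -> bool} -> R) : R :=
  \sum_(par : {ffun 'I_N -> 'I_N}) \sum_(mu : {ffun 'I_N -> bool})
     yule_weight r par mu * F par mu.

Definition tw (R : realType) (r : R) N (i p : 'I_N) (b : bool) : R :=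
  if nat_of_ord i == 0%N then
       ((nat_of_ord p == 0%N)%:R * (~~ b)%:R)
     else
       ((nat_of_ord p < nat_of_ord i)%N%:R / (nat_of_ord i)%:R
        * (if b then r else 1 - r)).

Lemma yw_tw (R : realType) (r : R) N par mu :
  @yule_weight R r N par mu = \prod_i tw r i (par i) (mu i).
Proof. by []. Qed.

Lemma cnt_lt (R : realType) N n : (n <= N)%N ->
  \sum_(p : 'I_N) ((p < n)%N)%:R = n%:R :> R.
Proof.
move=> h.
transitivity (\sum_(p : 'I_N | (p < n)%N) (1 : R)).
  by rewrite [RHS]big_mkcond /=; apply: eq_bigr => p _; case: ifP.
by rewrite -(big_ord_widen N (fun _ => (1 : R)) h) sumr_const card_ord.
Qed.

Lemma sum_a (R : realType) N (n : 'I_N) : (0 < n)%N ->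
  \sum_(p : 'I_N) ((p < n)%N)%:R / (n%:R : R) = 1.
Proof.
move=> hn; rewrite -big_distrl /= cnt_lt; last exact: ltnW.
by rewrite divff // pnatr_eq0 -lt0n.
Qed.

Definition Wr (R : realType) (r : R) N (n : 'I_N) par mu :=
  \prod_(i | i != n) tw r i (par i) (mu i).

Lemma wdec (R : realType) (r : R) N (n : 'I_N) par mu : (0 < n)%N ->
  yule_weight r par mu =
  ((par n < n)%N%:R / (n%:R : R)) * ((if mu n then r else 1 - r) * Wr r n par mu).
Proof.
move=> hn; rewrite yw_tw (bigD1 n) //= /tw.
have -> : (nat_of_ord n == 0%N) = false by apply/negbTE; rewrite -lt0n.
by rewrite /Wr !mulrA.
Qed.

Lemma Wr_updp (R : realType) (r : R) N (n : 'I_N) par mu p :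
  Wr r n (updf par n p) mu = Wr r n par mu.
Proof. by apply: eq_bigr => i hi; rewrite updf_ne. Qed.

Lemma Wr_updm (R : realType) (r : R) N (n : 'I_N) par mu b :
  Wr r n par (updf mu n b) = Wr r n par mu.
Proof. by apply: eq_bigr => i hi; rewrite updf_ne. Qed.

Lemma Eop_resample (R : realType) (r : R) N F (n : 'I_N) : (0 < n)%N ->
  Eop r F = Eop r (fun par mu => \sum_(p : 'I_N) \sum_(b : bool)
     ((p < n)%N%:R / (n%:R : R)) * ((if b then r else 1 - r) * F (updf par n p) (updf mu n b))).
Proof.
move=> hn; rewrite /Eop.
pose a := fun p : 'I_N => ((p < n)%N%:R / (n%:R : R)).
pose be := fun b : bool => if b then r else 1 - r.
transitivity (\sum_(par : {ffun 'I_N -> 'I_N}) \sum_(mu : {ffun 'I_N -> bool})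
   be (mu n) * ((a (par n) * Wr r n par mu) * F par mu)).
  apply: eq_bigr => par _; apply: eq_bigr => mu _; rewrite (wdec r par mu hn) /a /be.
  by ring.
transitivity (\sum_(par : {ffun 'I_N -> 'I_N}) \sum_(mu : {ffun 'I_N -> bool})
   be (mu n) * ((a (par n) * Wr r n par mu) * \sum_b be b * F par (updf mu n b))).
  apply: eq_bigr => par _; apply: (resample (B := fun mu => a (par n) * Wr r n par mu)).
    by rewrite big_bool /be /=; ring.
  by move=> mu b /=; rewrite Wr_updm.
rewrite exchange_big /=.
transitivity (\sum_(mu : {ffun 'I_N -> bool}) \sum_(par : {ffun 'I_N -> 'I_N})
   a (par n) * ((be (mu n) * Wr r n par mu) * \sum_b be b * F par (updf mu n b))).
  apply: eq_bigr => mu _; apply: eq_bigr => par _.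
  by ring.
transitivity (\sum_(mu : {ffun 'I_N -> bool}) \sum_(par : {ffun 'I_N -> 'I_N})
   a (par n) * ((be (mu n) * Wr r n par mu) * \sum_p a p * \sum_b be b * F (updf par n p) (updf mu n b))).
  apply: eq_bigr => mu _.
  apply: (@resample _ _ _ n a (fun par => be (mu n) * Wr r n par mu)
     (fun par => \sum_b be b * F par (updf mu n b))).
    exact: sum_a.
  by move=> par p /=; rewrite Wr_updp.
rewrite exchange_big /=; apply: eq_bigr => par _; apply: eq_bigr => mu _.
rewrite (wdec r par mu hn) -/(a (par n)) -/(be (mu n)) !mulrA; congr (_ * _).
apply: eq_bigr => p _; rewrite mulr_sumr; apply: eq_bigr => b _; by rewrite mulrA.
Qed.


Lemma w_supp (R : realType) (r : R) N par mu :
  @yule_weight R r N par mu != 0 -> Sp par.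
Proof.
rewrite yw_tw => /prodf_neq0 H i hi.
have := H i isT; rewrite /tw.
have -> : (nat_of_ord i == 0%N) = false by apply/negbTE; rewrite -lt0n.
by case: (par i < i)%N; rewrite ?mul0r ?eqxx.
Qed.

Lemma w_ge0 (R : realType) (r : R) N par mu : 0 <= r -> r <= 1 ->
  0 <= @yule_weight R r N par mu.
Proof.
move=> h0 h1; rewrite yw_tw; apply: prodr_ge0 => i _; rewrite /tw.
case: ifP => _; first by apply: mulr_ge0; apply: ler0n.
apply: mulr_ge0; first by apply: divr_ge0; apply: ler0n.
case: (mu i) => //; lra.
Qed.

Lemma Eop_supp (R : realType) (r : R) N F G :
  (forall par mu, @yule_weight R r N par mu != 0 -> F par mu = G par mu) ->
  Eop r F = Eop r G.
Proof.
move=> H; apply: eq_bigr => par _; apply: eq_bigr => mu _.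
case: (eqVneq (yule_weight r par mu) 0) => [->|hw]; first by rewrite !mul0r.
by rewrite H.
Qed.

Lemma Eop_le (R : realType) (r : R) N F G : 0 <= r -> r <= 1 ->
  (forall par mu, F par mu <= G par mu) -> @Eop R r N F <= Eop r G.
Proof.
move=> h0 h1 H; apply: ler_sum => par _; apply: ler_sum => mu _.
by apply: ler_wpM2l; [exact: w_ge0|exact: H].
Qed.

Lemma Eop_ge0 (R : realType) (r : R) N F : 0 <= r -> r <= 1 ->
  (forall par mu, 0 <= F par mu) -> 0 <= @Eop R r N F.
Proof.
move=> h0 h1 H; apply: sumr_ge0 => par _; apply: sumr_ge0 => mu _.
by apply: mulr_ge0; [exact: w_ge0|exact: H].
Qed.

Lemma EopZ (R : realType) (r : R) N (c : R) F :
  @Eop R r N (fun par mu => c * F par mu) = c * Eop r F.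
Proof.
rewrite /Eop mulr_sumr; apply: eq_bigr => par _; rewrite mulr_sumr.
by apply: eq_bigr => mu _; rewrite mulrCA.
Qed.

Lemma Eop1 (R : realType) (r : R) N : @Eop R r N (fun _ _ => 1) = 1.
Proof.
pose A := fun i p : 'I_N => if nat_of_ord i == 0%N then (nat_of_ord p == 0%N)%:R
   else (nat_of_ord p < nat_of_ord i)%N%:R / (nat_of_ord i)%:R : R.
pose Bt := fun (i : 'I_N) (b : bool) => if nat_of_ord i == 0%N then (~~ b)%:R
   else (if b then r else 1 - r).
have tw_AB : forall i p b, tw r i p b = A i p * Bt i b.
  by move=> i p b; rewrite /tw /A /Bt; case: ifP.
rewrite /Eop.
transitivity (\sum_(par : {ffun 'I_N -> 'I_N}) \sum_(mu : {ffun 'I_N -> bool})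
   (\prod_i A i (par i)) * (\prod_i Bt i (mu i))).
  apply: eq_bigr => par _; apply: eq_bigr => mu _.
  by rewrite mulr1 yw_tw -big_split /=; apply: eq_bigr => i _; rewrite tw_AB.
under eq_bigr do rewrite -big_distrr /=.
rewrite -big_distrl /=.
rewrite -(bigA_distr_bigA (fun i p => A i p)) -(bigA_distr_bigA (fun i b => Bt i b)) /=.
rewrite -big_split /=; apply: big1 => i _.
have -> : \sum_j Bt i j = 1.
  by rewrite big_bool /Bt; case: ifP => _ /=; [rewrite add0r | ring].
rewrite mulr1 /A; case hi: (nat_of_ord i == 0%N).
  rewrite (bigD1 i) //= hi big1 ?addr0 // => p hp.
  case: eqP => // hp0; exfalso; move/eqP: hp; apply; apply: val_inj => /=.
  by rewrite hp0; apply/esym/eqP.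
by apply: sum_a; rewrite lt0n hi.
Qed.


Lemma step_X (R : realType) (r : R) N k n (g : nat -> R) :
  (0 < n)%N -> forall hnN : (n < N)%N,
  Eop r (fun par mu => g (@Xc N par mu k n.+1)) =
  Eop r (fun par mu => \sum_(p : 'I_N) ((p < n)%N%:R / (n%:R : R)) *
     (r * g (Xc par mu k n + (n == k.-1))%N
      + (1 - r) * g (Xc par mu k n + (nat_of_ord (founder par mu N p) == k.-1))%N)).
Proof.
move=> hn hnN.
rewrite (@Eop_resample R r N _ (Ordinal hnN)) //.
apply: Eop_supp => par mu hw; have S := w_supp hw.
apply: eq_bigr => p _.
case hp: (p < n)%N; last by rewrite !mul0r big1 // => b _; rewrite mul0r.
rewrite big_bool /= -mulrDr; congr (_ * _).
rewrite !(Xc_S _ _ _ hnN) !Xc_upd //.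
rewrite !(@founder_upd_n N par mu (Ordinal hnN) p) //.
Qed.


Definition rf (R : realType) (m x : nat) : R := \prod_(i < m) (x + i)%N%:R.

Lemma rf_S (R : realType) m x : x%:R * rf R m x.+1 = rf R m x * (x + m)%N%:R.
Proof.
rewrite /rf.
transitivity (\prod_(i < m.+1) (x + i)%N%:R : R).
  by rewrite big_ord_recl /= addn0; congr (_ * _); apply: eq_bigr => i _; rewrite addSnnS.
by rewrite big_ord_recr.
Qed.

Lemma rf_0 (R : realType) m : (0 < m)%N -> rf R m 0 = 0.
Proof. by case: m => // m _; rewrite /rf big_ord_recl /= mul0r. Qed.

Lemma rf_1 (R : realType) m : rf R m 1 = m`!%:R.
Proof.
elim: m => [|m IH]; first by rewrite /rf big_ord0.
by rewrite /rf big_ord_recr /= -/(rf R m 1) IH factS natrM mulrC add1n.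
Qed.

Lemma rf_ge0 (R : realType) m x : 0 <= rf R m x.
Proof. by apply: prodr_ge0 => i _; apply: ler0n. Qed.

Lemma rf_ge (R : realType) m x : (x%:R : R) ^+ m <= rf R m x.
Proof.
elim: m => [|m IH]; first by rewrite /rf big_ord0 expr0.
rewrite /rf big_ord_recr /= -/(rf R m x) exprSr.
apply: ler_pM => //; first exact: exprn_ge0.
by rewrite ler_nat leq_addr.
Qed.

Lemma sum_card (R : realType) (T : finType) (P : pred T) :
  \sum_(i : T) (P i)%:R = #|[pred i | P i]|%:R :> R.
Proof.
rewrite -[RHS]mulr1n -sumr_const [RHS]big_mkcond /=.
by apply: eq_bigr => i _; rewrite inE; case: (P i).
Qed.

Lemma mom_step (R : realType) (r : R) N k n m :
  (2 <= k)%N -> (k <= n)%N -> (n < N)%N ->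
  Eop r (fun par mu => rf R m (@Xc N par mu k n.+1)) =
  (1 + (1 - r) * m%:R / n%:R) * Eop r (fun par mu => rf R m (@Xc N par mu k n)).
Proof.
move=> hk hkn hnN.
have hn : (0 < n)%N by apply: leq_trans hkn; apply: leq_trans hk.
rewrite (@step_X R r N k n (rf R m) hn hnN) -EopZ; apply: Eop_supp => par mu _.
have -> : (n == k.-1) = false.
  by apply/negbTE; move: hk hkn; case: k => // k; rewrite /= => _ h; rewrite neq_ltn h orbT.
set X := Xc par mu k n.
have key : \sum_(p : 'I_N) ((p < n)%N%:R : R) * rf R m (X + (nat_of_ord (founder par mu N p) == k.-1))%N
    = n%:R * rf R m X + m%:R * rf R m X.
  transitivity (\sum_(p : 'I_N) (((p < n)%N%:R : R) * rf R m X
      + ((p < n) && (nat_of_ord (founder par mu N p) == k.-1))%N%:R * (rf R m X.+1 - rf R m X))).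
    apply: eq_bigr => p _.
    case: (p < n)%N; case: (_ == _) => /=; rewrite ?addn0 ?addn1; ring.
  rewrite big_split /= -!big_distrl /= cnt_lt; last exact: ltnW.
  rewrite sum_card.
  have -> : #|[pred i : 'I_N | (i < n)%N && (nat_of_ord (founder par mu N i) == k.-1)]| = X by [].
  rewrite mulrBr rf_S natrD; ring.
transitivity (r * rf R m X * \sum_(p : 'I_N) ((p < n)%N%:R / (n%:R : R))
   + (1 - r) / n%:R * \sum_(p : 'I_N) ((p < n)%N%:R : R) * rf R m (X + (nat_of_ord (founder par mu N p) == k.-1))%N).
  rewrite !mulr_sumr -big_split /=; apply: eq_bigr => p _; rewrite addn0; ring.
have sa := @sum_a R N (Ordinal hnN) hn; rewrite /= in sa; rewrite sa key.
have hn0 : (n%:R : R) != 0 by rewrite pnatr_eq0 -lt0n.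
field. done.
Qed.


Lemma mom_base (R : realType) (r : R) N n m :
  (0 < n)%N -> (n < N)%N -> (0 < m)%N ->
  Eop r (fun par mu => rf R m (@Xc N par mu n.+1 n.+1)) = r * m`!%:R.
Proof.
move=> hn hnN hm.
rewrite (@step_X R r N n.+1 n (rf R m) hn hnN) /= eqxx.
transitivity (@Eop R r N (fun par mu => (r * m`!%:R) * 1)); last by rewrite EopZ Eop1 mulr1.
apply: Eop_supp => par mu hw.
have S := w_supp hw.
have X0 : Xc par mu n.+1 n = 0%N.
  apply: eq_card0 => i; rewrite !inE /=.
  apply/negbTE; apply/negP => /andP [hi /eqP hf].
  by have := founder_le mu S N i; rewrite hf leqNgt hi.
rewrite X0 /= add0n rf_1 mulr1.
transitivity (\sum_(p : 'I_N) ((p < n)%N%:R / (n%:R : R)) * (r * m`!%:R)).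
  apply: eq_bigr => p _; case hp: (p < n)%N; last by rewrite !mul0r.
  have -> : (nat_of_ord (founder par mu N p) == n) = false.
    by apply/negbTE; rewrite neq_ltn; apply/orP; left; apply: leq_ltn_trans (founder_le mu S N p) hp.
  by rewrite add0n rf_0 // mulr0 addr0.
rewrite -big_distrl /=.
have sa := @sum_a R N (Ordinal hnN) hn; rewrite /= in sa; by rewrite sa mul1r.
Qed.

Lemma bernoulli (R : realType) (x : R) m : 0 <= x -> 1 + m%:R * x <= (1 + x) ^+ m.
Proof.
move=> hx; elim: m => [|m IH]; first by rewrite mul0r addr0 expr0.
rewrite exprSr; apply: le_trans (_ : (1 + m%:R * x) * (1 + x) <= _).
  rewrite -natr1; have h : 0 <= m%:R * x * x by apply: mulr_ge0 => //; apply: mulr_ge0.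
  nra.
apply: ler_wpM2r; last exact: IH. lra.
Qed.

Definition u (R : realType) (c : R) (x : nat) : R := expR (c * ln (x%:R : R)).

Lemma u_gt0 (R : realType) (c : R) x : 0 < u c x.
Proof. exact: expR_gt0. Qed.

Lemma u_step (R : realType) (c : R) n : 0 < c -> (2 <= n)%N ->
  (1 + c / n%:R) * u c n.-1 <= u c n.
Proof.
move=> hc hn.
have hn0 : (0 : R) < n%:R by rewrite ltr0n; apply: leq_trans hn.
have hn1 : (0 : R) < n.-1%:R by rewrite ltr0n -ltnS prednK //; apply: leq_trans hn.
apply: le_trans (_ : expR (c / n%:R) * u c n.-1 <= _).
  apply: ler_wpM2r; [exact: ltW (u_gt0 _ _)| exact: expR_ge1Dx].
rewrite /u -expRD ler_expR.
have E : (n.-1%:R : R) = n%:R * (1 + (- (n%:R)^-1)).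
  rewrite mulrDr mulr1 mulrN divff ?gt_eqF //.
  rewrite -[in RHS](prednK (_ : (0 < n)%N)); first by rewrite -natr1 addrK.
  by apply: leq_trans hn.
have hpos : 0 < 1 + (- (n%:R : R)^-1).
  by rewrite subr_gt0 invf_lt1 // ltr1n.
rewrite E lnM ?posrE //.
have := @le_ln1Dx R (- (n%:R)^-1).
have hlt : -1 < - (n%:R : R)^-1.
  by rewrite ltrN2 invf_lt1 // ltr1n; apply: leq_trans hn.
move=> /(_ hlt) hl.
rewrite mulrDr; have : c * ln (1 + - (n%:R)^-1) <= c * (- (n%:R)^-1).
  by apply: ler_wpM2l => //; exact: ltW.
rewrite mulrN; lra.
Qed.


Lemma iter_bound (R : realType) (r : R) N K m :
  0 < r -> r < 1 -> (1 <= K)%N -> (0 < m)%N ->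
  forall j, (K.+1 + j <= N)%N ->
  Eop r (fun par mu => rf R m (@Xc N par mu K.+1 (K.+1 + j))) * u (1 - r) K ^+ m
  <= m`!%:R * u (1 - r) (K + j) ^+ m.
Proof.
move=> hr0 hr1 hK hm; elim=> [|j IH] hj.
  rewrite !addn0 mom_base //; last by rewrite addn0 in hj.
  apply: ler_wpM2r; first by apply: exprn_ge0; exact: ltW (u_gt0 _ _).
  apply: ler_piMl; [exact: ler0n | exact: ltW].
have hj' : (K.+1 + j <= N)%N by apply: leq_trans hj; rewrite addnS.
have hn : (K.+1 + j < N)%N by rewrite -addnS.
rewrite addnS (@mom_step R r N K.+1 (K.+1 + j) m) //; last by rewrite leq_addr.
have hE := IH hj'.
set E := Eop _ _ in hE *.
set c := 1 - r in hE *.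
have hc : 0 < c by rewrite /c; lra.
set n := (K.+1 + j)%N.
have hnS : n = (K + j).+1 by rewrite /n addSn.
have hq : 0 <= 1 + c * m%:R / n%:R.
  apply: addr_ge0 => //; apply: divr_ge0; [apply: mulr_ge0; [exact: ltW|exact: ler0n]|exact: ler0n].
apply: (@le_trans _ _ ((1 + c * (m%:R / n%:R)) * (m`!%:R * u c (K + j) ^+ m))).
  rewrite -[X in X <= _]mulrA; apply: le_trans (ler_wpM2l hq hE) _; by rewrite !mulrA.
have hb : 1 + c * (m%:R / n%:R) <= (1 + c / n%:R) ^+ m.
  have := @bernoulli R (c / n%:R) m (divr_ge0 (ltW hc) (ler0n _ _)).
  by rewrite mulrCA.
have hK1 : (2 <= (K + j).+1)%N by rewrite ltnS; apply: leq_trans hK (leq_addr _ _).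
have hus := @u_step R c (K + j).+1 hc hK1.
rewrite -hnS /= in hus.
have hu0 := u_gt0 c (K + j).
apply: (@le_trans _ _ ((1 + c / n%:R) ^+ m * (m`!%:R * u c (K + j) ^+ m))).
  apply: ler_wpM2r => //; apply: mulr_ge0; [exact: ler0n | apply: exprn_ge0; exact: ltW].
rewrite mulrCA -exprMn addnS; apply: ler_wpM2l; first exact: ler0n.
apply: lerXn2r => //; rewrite ?nnegrE ?(ltW (u_gt0 _ _)) //.
apply: mulr_ge0; last exact: ltW.
apply: addr_ge0 => //; apply: divr_ge0; [exact: ltW|exact: ler0n].
Qed.

Lemma uK_ge (R : realType) (c : R) K m : (1 <= K)%N -> 2 <= m%:R * c ->
  (K%:R : R) ^+ 2 <= u c K ^+ m.
Proof.
move=> hK hmc.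
have hK0 : (0 : R) < K%:R by rewrite ltr0n.
rewrite /u -expRM_natl -{1}(@lnK R K%:R) ?posrE // -expRM_natl ler_expR.
have hl : 0 <= ln (K%:R : R) by apply: ln_ge0; rewrite ler1n.
rewrite mulrA; apply: ler_wpM2r => //.
Qed.

Lemma powR_u (R : realType) (c : R) N : (0 < N)%N -> powR (N%:R : R) c = u c N.
Proof.
move=> hN; rewrite /powR /u.
have -> : ((N%:R : R) == 0) = false by apply/negbTE; rewrite pnatr_eq0 -lt0n.
by [].
Qed.

Lemma Rkn_Xc N par mu K : @Rkn N par mu K.+1 = Xc par mu K.+1 N.
Proof. by apply: eq_card => i; rewrite !inE ltn_ord eqSS. Qed.

Lemma perk (R : realType) (r : R) N K m :
  0 < r -> r < 1 -> (1 <= K)%N -> (0 < m)%N -> 2 <= m%:R * (1 - r) ->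
  (K.+1 <= N)%N ->
  @yule_prob R r N (fun par mu => powR (N%:R) (1 - r) <= (Rkn par mu K.+1)%:R)
  <= m`!%:R / (K%:R ^+ 2).
Proof.
move=> hr0 hr1 hK hm hmc hKN.
have hN : (0 < N)%N by apply: leq_trans hKN.
set c := 1 - r.
have hc : 0 < c by rewrite /c; lra.
rewrite powR_u //.
set q := u c N.
have hq : 0 < q := u_gt0 c N.
have -> : @yule_prob R r N (fun par mu => (q <= (Rkn par mu K.+1)%:R)%R) =
    @Eop R r N (fun par mu => ((q <= (@Xc N par mu K.+1 N)%:R)%R)%:R).
  by apply: eq_bigr => par _; apply: eq_bigr => mu _; rewrite Rkn_Xc.
set E := Eop r (fun par mu => rf R m (@Xc N par mu K.+1 N)).
have hqm : 0 < q ^+ m by apply: exprn_gt0.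
apply: (@le_trans _ _ (E / q ^+ m)).
  rewrite mulrC -EopZ; apply: Eop_le; [exact: ltW|exact: ltW|] => par mu.
  case h: (q <= (@Xc N par mu K.+1 N)%:R)%R; last by rewrite mulr_ge0 ?rf_ge0 // invr_ge0 ltW.
  rewrite mulrC ler_pdivlMr // mul1r.
  apply: le_trans (rf_ge R m _).
  by apply: lerXn2r => //; rewrite nnegrE ?ler0n ?ltW.
have hj : (K.+1 + (N - K.+1) <= N)%N by rewrite subnKC.
have hit := @iter_bound R r N K m hr0 hr1 hK hm (N - K.+1) hj.
rewrite subnKC // -/c -/E in hit.
have hE0 : 0 <= E by apply: Eop_ge0; [exact: ltW|exact: ltW|] => par mu; exact: rf_ge0.
have hKN' : (K + (N - K.+1))%N = N.-1.
  by clear -hKN; move: hKN; case: N => //= N' h; lia.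
rewrite hKN' in hit.
have hN2 : (2 <= N)%N by apply: leq_trans hKN; rewrite ltnS.
have hus := @u_step R c N hc hN2.
have hu1 : u c N.-1 <= q.
  apply: le_trans hus; rewrite ler_peMl //; first exact: ltW (u_gt0 _ _).
  by rewrite lerDl divr_ge0 // ltW.
have hK2 := @uK_ge R c K m hK hmc.
have hK0 : (0 : R) < K%:R ^+ 2 by apply: exprn_gt0; rewrite ltr0n.
rewrite ler_pdivrMr // mulrAC ler_pdivlMr //.
apply: le_trans (_ : E * u c K ^+ m <= _).
  by apply: ler_wpM2l.
apply: le_trans hit _; apply: ler_wpM2l; first exact: ler0n.
apply: lerXn2r => //; rewrite nnegrE ltW //; exact: u_gt0.
Qed.


Lemma tele_step (R : realType) (x : R) : 0 < x ->
  ((x + 1) ^+ 2)^-1 <= x^-1 - (x + 1)^-1.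
Proof.
move=> hx.
have hx1 : 0 < x + 1 by lra.
have e : x^-1 - (x + 1)^-1 - ((x + 1) ^+ 2)^-1 = (x * (x + 1) ^+ 2)^-1.
  by field; rewrite ?gt_eqF.
rewrite -subr_ge0 e invr_ge0; apply: mulr_ge0; [exact: ltW|exact: exprn_ge0 (ltW hx1)].
Qed.

Lemma tele (R : realType) M : (1 <= M)%N -> forall n, (M <= n)%N ->
  \sum_(M.+2 <= k < n.+2) (((k.-1)%:R : R) ^+ 2)^-1 <= M%:R^-1 - n%:R^-1.
Proof.
move=> hM; elim=> [|n IH] hMn; first by move: hM hMn; case: M.
case: (leqP M n) => h.
  rewrite big_nat_recr //=.
  have hn0 : (0 : R) < n%:R by rewrite ltr0n; apply: leq_trans h.
  have ts := tele_step hn0; have ih := IH h.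
  rewrite -natr1; lra.
have -> : M = n.+1 by apply/eqP; rewrite eqn_leq hMn.
by rewrite big_geq // subrr.
Qed.

Unset Implicit Arguments.

Theorem lemma5p1 (R : realType) (r : R) (hr0 : 0 < r) (hr1 : r < 1)
  (eps : R) (heps : 0 < eps) :
  exists L : nat, (0 < L)%N /\
    exists N0 : nat, forall N : nat, (N0 <= N)%N ->
      \sum_(L <= k < N.+1)
         @yule_prob R r N (fun par mu => powR (N%:R) (1 - r) <= (Rkn par mu k)%:R)
      < eps.
Proof.
set c := 1 - r.
have hc : 0 < c by rewrite /c; lra.
set m := Num.Def.archi_bound (2 / c).
have hm2 : 2 / c < m%:R by apply: archi_boundP; apply: divr_ge0 => //; exact: ltW.
have hmc : 2 <= m%:R * c by rewrite -ler_pdivrMr //; exact: ltW.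
have hm : (0 < m)%N.
  by rewrite -(ltr0n R); apply: le_lt_trans hm2; apply: divr_ge0 => //; exact: ltW.
set M := (Num.Def.archi_bound (m`!%:R / eps)).+1.
have hM : (m`!%:R / eps : R) < M%:R.
  apply: lt_le_trans (archi_boundP _) _; first by apply: divr_ge0 => //; exact: ltW.
  by rewrite ler_nat.
have hM1 : (1 <= M)%N by [].
exists M.+2; split => //; exists 0%N => N _.
case: (leqP N.+1 M.+2) => hNL; first by rewrite big_geq.
have hMN : (M.+2 <= N)%N by rewrite -ltnS.
apply: (@le_lt_trans _ _ (\sum_(M.+2 <= k < N.+1) m`!%:R / (((k.-1)%:R : R) ^+ 2))).
  apply: ler_sum_nat => k /andP [hk1 hk2].
  move: hk1 hk2; case: k => // K hk1 hk2 /=.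
  apply: perk => //.
  by clear -hk1; lia.
rewrite -big_distrr /=.
have hN : N.+1 = (N.-1).+2 by clear -hMN; lia.
rewrite hN.
have hMn : (M <= N.-1)%N by clear -hMN; lia.
have ht := tele R hM1 hMn.
apply: (@le_lt_trans _ _ (m`!%:R * (M%:R^-1 - (N.-1)%:R^-1))).
  by apply: ler_wpM2l => //; exact: ler0n.
apply: (@le_lt_trans _ _ (m`!%:R * M%:R^-1)).
  apply: ler_wpM2l; first exact: ler0n.
  by rewrite lerBlDr lerDl invr_ge0 ler0n.
have hM0 : (0 : R) < M%:R by rewrite ltr0n.
by rewrite ltr_pdivrMr // mulrC -ltr_pdivrMr.
Qed.
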